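(* Let $n\ge 2$ and let $\mathcal{D}\subseteq\mathcal{M}_{d\times d}(\mathbb{C})$ be the algebra of diagonal matrices. If $\mathcal{A}$ is a maximal subalgebra of $\mathcal{T}_{n,d}(\mathcal{D})$ (an algebra contained in $\mathcal{T}_{n,d}(\mathcal{D})$ not properly contained in any other algebra contained in $\mathcal{T}_{n,d}(\mathcal{D})$), then $\mathcal{A}=\mathcal{F}_{A,B}^{\mathcal{D}}$ for some $A,B\in\mathcal{D}$.
   Context: For positive integers $n,d$, $\mathcal{T}_{n,d}$ denotes the set of block Toeplitz matrices $\mathbf{T}=(T_{p-q})_{p,q=0}^{n-1}$: $nd\times nd$ complex matrices partitioned into $n\times n$ blocks of size $d\times d$, whose $(p,q)$ block is $T_{p-q}$ for some $T_{-(n-1)},\dots,T_{n-1}\in\mathcal{M}_{d\times d}(\mathbb{C})$. For a subalgebra $\mathcal{B}\subseteq\mathcal{M}_{d\times d}(\mathbb{C})$, $\mathcal{T}_{n,d}(\mathcal{B})$ is the set of $\mathbf{T}\in\mathcal{T}_{n,d}$ with all $T_j\in\mathcal{B}$. An algebra contained in a set of matrices is a subset that is a linear subspace closed under matrix multiplication. For $A,B\in\mathcal{M}_{d\times d}(\mathbb{C})$, $$\mathcal{F}_{A,B}^{\mathcal{B}}=\{(T_{p-q})_{p,q=0}^{n-1}\in\mathcal{T}_{n,d}(\mathcal{B}) : AT_j=BT_{j-n}\text{ for } j=1,2,\dots,n-1\}.$$ *)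

(* Defs.v *)
From HB Require Import structures.
From mathcomp Require Import all_boot all_order all_algebra.
Set Implicit Arguments. Unset Strict Implicit. Unset Printing Implicit Defensive.
Import Order.TTheory GRing.Theory Num.Theory.
Local Open Scope ring_scope.

(* Index of the (r)-th row inside the p-th block row of an nd x nd matrix:
   the natural number p * d + r. *)
Lemma blk_idx_subproof (n d : nat) (p : 'I_n) (r : 'I_d) : (p * d + r < n * d)%N.
Proof.
have h1 : (p * d + r < p.+1 * d)%N by rewrite mulSn [(d + _)%N]addnC ltn_add2l.
by apply: (leq_trans h1); rewrite leq_mul2r ltn_ord orbT.
Qed.

Definition blk_idx (n d : nat) (p : 'I_n) (r : 'I_d) : 'I_(n * d) :=
  Ordinal (blk_idx_subproof p r).

Definition diag_alg (C : numClosedFieldType) (d : nat) (X : 'M[C]_d) : Prop :=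
  is_diag_mx X.

Definition block_toeplitz_with (C : numClosedFieldType) (n d : nat)
    (T : int -> 'M[C]_d) (M : 'M[C]_(n * d)) : Prop :=
  forall (p q : 'I_n) (r s : 'I_d),
    M (blk_idx p r) (blk_idx q s) = T (p%:Z - q%:Z) r s.

Definition toeplitz_in (C : numClosedFieldType) (n d : nat)
    (B : 'M[C]_d -> Prop) (M : 'M[C]_(n * d)) : Prop :=
  exists T : int -> 'M[C]_d,
    (forall j : int, (- (n%:Z - 1) <= j <= n%:Z - 1) -> B (T j)) /\
    block_toeplitz_with T M.

Definition F_set (C : numClosedFieldType) (n d : nat)
    (Bs : 'M[C]_d -> Prop) (A B : 'M[C]_d) (M : 'M[C]_(n * d)) : Prop :=
  exists T : int -> 'M[C]_d,
    (forall j : int, (- (n%:Z - 1) <= j <= n%:Z - 1) -> Bs (T j)) /\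
    block_toeplitz_with T M /\
    (forall j : nat, (1 <= j <= n - 1)%N -> A *m T j%:Z = B *m T (j%:Z - n%:Z)).

Definition algebra_in (C : numClosedFieldType) (N : nat)
    (S : 'M[C]_N -> Prop) (Al : 'M[C]_N -> Prop) : Prop :=
  (forall X, Al X -> S X) /\
  Al 0 /\
  (forall (a : C) X Y, Al X -> Al Y -> Al (a *: X + Y)) /\
  (forall X Y, Al X -> Al Y -> Al (X *m Y)).

Definition maximal_algebra_in (C : numClosedFieldType) (N : nat)
    (S : 'M[C]_N -> Prop) (Al : 'M[C]_N -> Prop) : Prop :=
  algebra_in S Al /\
  forall Al' : 'M[C]_N -> Prop, algebra_in S Al' ->
    (forall X, Al X -> Al' X) -> (forall X, Al' X -> Al X).

(* Main.v *)
Require Import Defs.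
From HB Require Import structures.
From mathcomp Require Import all_boot all_order all_algebra.
From mathcomp Require Import zify ring.
From Stdlib Require Import Classical IndefiniteDescription.
Import Order.TTheory GRing.Theory Num.Theory.
Local Open Scope ring_scope.

Module Aux.
Set Implicit Arguments. Unset Strict Implicit. Unset Printing Implicit Defensive.

Section Blocks.
Variable C : numClosedFieldType.
Variables n d : nat.

Lemma blk_val (p : 'I_n.+1) (r : 'I_d.+1) : (blk_idx p r : nat) = (p * d.+1 + r)%N.
Proof. by []. Qed.

Definition unblk (i : 'I_(n.+1 * d.+1)) : 'I_n.+1 * 'I_d.+1 :=
  (inord (i %/ d.+1), inord (i %% d.+1)).

Lemma unblkK : cancel (fun pr : 'I_n.+1 * 'I_d.+1 => blk_idx pr.1 pr.2) unblk.
Proof.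
case=> p r; rewrite /unblk /=; congr pair; apply: val_inj; rewrite /= inordK.
- by rewrite divnMDl // divn_small ?addn0.
- by rewrite divnMDl // divn_small ?addn0.
- by rewrite modnMDl modn_small.
- by rewrite modnMDl modn_small.
Qed.

Lemma blkK : cancel unblk (fun pr : 'I_n.+1 * 'I_d.+1 => blk_idx pr.1 pr.2).
Proof.
move=> i; apply: val_inj; rewrite /= !inordK.
- by rewrite -divn_eq.
- by rewrite ltn_mod.
- by rewrite ltn_divLR // ltn_ord.
Qed.

Lemma sum_blk (F : 'I_(n.+1 * d.+1) -> C) :
  \sum_i F i = \sum_(k < n.+1) \sum_(t < d.+1) F (blk_idx k t).
Proof.
rewrite pair_big /=.
rewrite (reindex (fun pr : 'I_n.+1 * 'I_d.+1 => blk_idx pr.1 pr.2)) //.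
by exists unblk => x _; [apply: unblkK | apply: blkK].
Qed.

Lemma blk_inj p r p' r' : blk_idx p r = blk_idx p' r' :> 'I_(n.+1 * d.+1) -> p = p' /\ r = r'.
Proof.
move=> h; have h1 := unblkK (p, r); have h2 := unblkK (p', r').
by move: h1; rewrite /= h h2; case=> -> ->.
Qed.


Lemma sum_single m (k0 : 'I_m) (F : 'I_m -> C) :
  (forall k, k != k0 -> F k = 0) -> \sum_k F k = F k0.
Proof.
by move=> h; rewrite (bigD1 k0) //= big1 ?addr0 // => k /h.
Qed.

Lemma diag_mul m (A X : 'M[C]_m) r s : is_diag_mx A -> (A *m X) r s = A r r * X r s.
Proof.
move/is_diag_mxP=> hA; rewrite mxE (sum_single (k0:=r)) // => k kr.
by rewrite hA ?mul0r // eq_sym.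
Qed.

Definition BD (M : 'M[C]_(n.+1 * d.+1)) :=
  forall p q r s, r != s -> M (blk_idx p r) (blk_idx q s) = 0.

Definition slice (M : 'M[C]_(n.+1 * d.+1)) r : 'M[C]_n.+1 :=
  \matrix_(p, q) M (blk_idx p r) (blk_idx q r).

Lemma mul_blk (X Y : 'M[C]_(n.+1 * d.+1)) p r q s :
  (X *m Y) (blk_idx p r) (blk_idx q s) =
  \sum_(k < n.+1) \sum_(t < d.+1) X (blk_idx p r) (blk_idx k t) * Y (blk_idx k t) (blk_idx q s).
Proof. by rewrite mxE sum_blk. Qed.

Lemma BD_mul X Y : BD X -> BD Y -> BD (X *m Y).
Proof.
move=> hX hY p q r s rs; rewrite mul_blk big1 // => k _; rewrite big1 // => t _.
case: (eqVneq t r) => [->|tr]; first by rewrite hY // mulr0.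
by rewrite hX ?mul0r // eq_sym.
Qed.

Lemma slice_mul X Y r : BD X -> slice (X *m Y) r = slice X r *m slice Y r.
Proof.
move=> hX; apply/matrixP => p q; rewrite [LHS]mxE mul_blk [RHS]mxE; apply: eq_bigr => k _.
rewrite (sum_single (k0:=r)) ?mxE // => t tr; by rewrite hX ?mul0r // eq_sym.
Qed.

Definition ST m (N : 'M[C]_m.+1) := exists t : int -> C, forall p q : 'I_m.+1, N p q = t (p%:Z - q%:Z).

Lemma rng (p q : 'I_n.+1) : - (n.+1%:Z - 1) <= p%:Z - q%:Z <= n.+1%:Z - 1.
Proof. have := ltn_ord p; have := ltn_ord q; lia. Qed.

Lemma TI_iff M : toeplitz_in (@diag_alg C d.+1) M <-> BD M /\ forall r, ST (slice M r).
Proof.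
split.
- case=> T [hT hM]; split.
  + move=> p q r s rs; rewrite hM; move/is_diag_mxP: (hT _ (rng p q)); apply.
    by apply: contra rs => /eqP e; apply/eqP/val_inj.
  + by move=> r; exists (fun k => T k r r) => p q; rewrite mxE hM.
- case=> hB hS.
  have [t ht] : exists t : 'I_d.+1 -> int -> C, forall r p q, slice M r p q = t r (p%:Z - q%:Z).
    exists (fun r => proj1_sig (constructive_indefinite_description _ (hS r))).
    by move=> r; exact: (proj2_sig (constructive_indefinite_description _ (hS r))).
  exists (fun k => \matrix_(r, s) if r == s then t r k else 0); split.
  + move=> j _; apply/is_diag_mxP => r s rs; rewrite mxE ifN //.
  + move=> p q r s; rewrite mxE; case: eqP => [<-|/eqP rs]; first by rewrite -ht mxE.
    by rewrite hB.
Qed.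


Definition FcM m (a b : C) (N : 'M[C]_m.+1) :=
  forall j : nat, (0 < j)%N -> (j <= m)%N -> a * N (inord j) ord0 = b * N ord0 (inord (m.+1 - j)).

Lemma sl_pos T M r j : block_toeplitz_with T M -> (j <= n)%N ->
  slice M r (inord j) ord0 = T j%:Z r r.
Proof.
move=> hM jn; rewrite mxE hM inordK ?ltnS //; congr (T _ r r); by rewrite /= subr0.
Qed.

Lemma sl_neg T M r j : block_toeplitz_with T M -> (0 < j)%N -> (j <= n)%N ->
  slice M r ord0 (inord (n.+1 - j)) = T (j%:Z - n.+1%:Z) r r.
Proof.
move=> hM j0 jn; rewrite mxE hM inordK; [congr (T _ r r); rewrite /=; lia | lia].
Qed.

Lemma F_iff (A B : 'M[C]_d.+1) M : is_diag_mx A -> is_diag_mx B ->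
  F_set (@diag_alg C d.+1) A B M <->
  toeplitz_in (@diag_alg C d.+1) M /\ forall r, FcM (A r r) (B r r) (slice M r).
Proof.
move=> hA hB; split.
- case=> T [hT [hM hF]]; split; first by exists T.
  move=> r j j0 jn; have := congr1 (fun X : 'M[C]_d.+1 => X r r) (hF j _).
  rewrite !diag_mul // (sl_pos _ hM) // (sl_neg _ hM) //; apply; apply/andP; split => //.
  by rewrite subn1.
- case=> [[T [hT hM]] hF]; exists T; split => //; split => //.
  move=> j /andP[j1 jn]; rewrite subn1 /= in jn.
  have r1 : - (n.+1%:Z - 1) <= j%:Z <= n.+1%:Z - 1 by lia.
  have r2 : - (n.+1%:Z - 1) <= j%:Z - n.+1%:Z <= n.+1%:Z - 1 by lia.
  apply/matrixP => r s; rewrite !diag_mul //.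
  case: (eqVneq r s) => [<-|rs].
  + by have := hF r j j1 jn; rewrite (sl_pos _ hM) // (sl_neg _ hM).
  + move/is_diag_mxP: (hT _ r1) => -> //; move/is_diag_mxP: (hT _ r2) => -> //.
    by rewrite !mulr0.
Qed.

End Blocks.


Section Scalar.
Variable C : numClosedFieldType.
Variable m : nat.
Implicit Types X Y N : 'M[C]_m.+1.

Lemma tele (x y : int -> C) (p q : nat) :
  \sum_(k < m.+1) x (p.+1%:Z - k%:Z) * y (k%:Z - q.+1%:Z)
  - \sum_(k < m.+1) x (p%:Z - k%:Z) * y (k%:Z - q%:Z)
  = x p.+1%:Z * y (- q.+1%:Z) - x (p.+1%:Z - m.+1%:Z) * y (m.+1%:Z - q.+1%:Z).
Proof.
pose h (k : nat) := x (p.+1%:Z - k%:Z) * y (k%:Z - q.+1%:Z).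
have e2 : \sum_(k < m.+1) x (p%:Z - k%:Z) * y (k%:Z - q%:Z) = \sum_(k < m.+1) h k.+1.
  by apply: eq_bigr => k _; rewrite /h; congr (x _ * y _); lia.
rewrite e2 (big_ord_recl m (fun k : 'I_m.+1 => h k)) big_ord_recr /=.
rewrite /h; set S := \sum_(i < m) _.
have e3 : x (p.+1%:Z - 0%:Z) * y (0%:Z - q.+1%:Z) = x p.+1%:Z * y (- q.+1%:Z).
  by congr (x _ * y _); lia.
rewrite e3; ring.
Qed.


Lemma mul_ST X Y (x y : int -> C) (p q : nat) :
  (forall p q : 'I_m.+1, X p q = x (p%:Z - q%:Z)) ->
  (forall p q : 'I_m.+1, Y p q = y (p%:Z - q%:Z)) ->
  (p <= m)%N -> (q <= m)%N ->
  (X *m Y) (inord p) (inord q) = \sum_(k < m.+1) x (p%:Z - k%:Z) * y (k%:Z - q%:Z).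
Proof.
move=> hx hy pm qm; rewrite mxE; apply: eq_bigr => k _.
by rewrite hx hy !inordK.
Qed.

Definition u N (i : nat) := N (inord i) ord0.
Definition v N (i : nat) := N ord0 (inord (m.+1 - i)).

Definition CR X Y := forall i j : nat, (0 < i)%N -> (i <= m)%N -> (0 < j)%N -> (j <= m)%N ->
  u X i * v Y j = v X i * u Y j.

Lemma uv_ST N t i : (forall p q : 'I_m.+1, N p q = t (p%:Z - q%:Z)) -> (0 < i)%N -> (i <= m)%N ->
  u N i = t i%:Z /\ v N i = t (i%:Z - m.+1%:Z).
Proof.
move=> h i0 im; rewrite /u /v !h !inordK /=; last 2 first.
- lia.
- lia.
by split; congr t; lia.
Qed.

Lemma crit1 X Y : ST X -> ST Y -> ST (X *m Y) -> CR X Y.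
Proof.
case=> x hx [y hy] [w hw] i j i0 im j0 jm.
have [ux vx] := uv_ST hx i0 im; have [uy vy] := uv_ST hy j0 jm.
rewrite ux vx uy vy.
case: i i0 im {ux vx} => // i _ im.
have e1 := mul_ST hx hy (p := i.+1) (q := (m - j)%N.+1) im ltac:(lia).
have e2 := mul_ST hx hy (p := i) (q := m - j) ltac:(lia) ltac:(lia).
have := tele x y i (m - j)%N; rewrite -e1 -e2.
rewrite !hw !inordK; [|lia|lia|lia|lia].
have -> : i.+1%:Z - (m - j)%N.+1%:Z = i%:Z - (m - j)%N%:Z by lia.
rewrite subrr => /eqP; rewrite eq_sym subr_eq0 => /eqP e.
move: e.
have -> : - (m - j)%N.+1%:Z = j%:Z - m.+1%:Z by lia.
have -> : m.+1%:Z + (j%:Z - m.+1%:Z) = j%:Z by lia.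
by move=> ->.
Qed.

Lemma shift_iter N :
  (forall p q, (p < m)%N -> (q < m)%N -> N (inord p.+1) (inord q.+1) = N (inord p) (inord q)) ->
  forall s p q, (p + s <= m)%N -> (q + s <= m)%N ->
  N (inord (p + s)) (inord (q + s)) = N (inord p) (inord q).
Proof.
move=> h; elim=> [|s IH] p q hp hq; first by rewrite !addn0.
rewrite !addnS h; [|lia|lia]; apply: IH; lia.
Qed.

Lemma ord0E : (ord0 : 'I_m.+1) = inord 0.
Proof. by apply: val_inj; rewrite /= inordK. Qed.

Lemma shift_ST N :
  (forall p q, (p < m)%N -> (q < m)%N -> N (inord p.+1) (inord q.+1) = N (inord p) (inord q)) ->
  ST N.
Proof.
move=> h.
exists (fun k : int => if (0 <= k) then N (inord `|k|%N) ord0 else N ord0 (inord `|k|%N)).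
move=> p q; have pl := ltn_ord p; have ql := ltn_ord q; case: (leqP q p) => hpq.
- have := shift_iter h (s := q) (p := (p - q)%N) (q := 0%N) ltac:(lia) ltac:(lia).
  rewrite subnK // add0n !inord_val => ->.
  have -> : (0 <= p%:Z - q%:Z) = true by apply/idP; lia.
  have -> : `|p%:Z - q%:Z|%N = (p - q)%N by lia.
  by rewrite ord0E.
- have := shift_iter h (s := p) (p := 0%N) (q := (q - p)%N) ltac:(lia) ltac:(lia).
  rewrite subnK ?(ltnW hpq) // add0n !inord_val => ->.
  have -> : (0 <= p%:Z - q%:Z) = false by apply/negbTE; lia.
  have -> : `|p%:Z - q%:Z|%N = (q - p)%N by lia.
  by rewrite ord0E.
Qed.

Lemma crit2 X Y : ST X -> ST Y -> CR X Y -> ST (X *m Y).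
Proof.
case=> x hx [y hy] hc; apply: shift_ST => p q pm qm.
rewrite !(mul_ST hx hy); [|lia|lia|lia|lia].
apply/eqP; rewrite -subr_eq0 tele.
have := hc p.+1 (m - q)%N ltac:(lia) ltac:(lia) ltac:(lia) ltac:(lia).
have [ux vx] := uv_ST hx (i := p.+1) ltac:(lia) ltac:(lia).
have [uy vy] := uv_ST hy (i := m - q) ltac:(lia) ltac:(lia).
rewrite ux vx uy vy.
have -> : (m - q)%N%:Z - m.+1%:Z = - q.+1%:Z by lia.
have -> : m.+1%:Z - q.+1%:Z = (m - q)%N%:Z by lia.
by move=> ->; rewrite subrr.
Qed.

Definition Zm (a b : C) : 'M[C]_m.+1 :=
  \matrix_(p, q) ((if (p : nat) == q.+1 then b else 0) +
                  (if ((p : nat) == 0%N) && ((q : nat) == m) then a else 0)).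

Lemma XZ X a b p q : (X *m Zm a b) p q =
  (if (q < m)%N then X p (inord q.+1) * b else 0) + (if (q : nat) == m then X p ord0 * a else 0).
Proof.
rewrite mxE; under eq_bigr do rewrite mxE mulrDr.
rewrite big_split /=; have ql := ltn_ord q; congr (_ + _).
- case: ifP => hq.
  + rewrite (sum_single (k0 := inord q.+1)) ?inordK ?eqxx // => k kq.
    rewrite ifN ?mulr0 //; apply: contra kq => /eqP e; apply/eqP/val_inj.
    by rewrite /= inordK ?e.
  + rewrite big1 // => k _; rewrite ifN ?mulr0 //; have := ltn_ord k; lia.
- case: eqP => hq.
  + rewrite (sum_single (k0 := ord0)) /= ?hq ?eqxx // => k k0.
    rewrite ifN ?mulr0 //; apply: contra k0 => /andP[/eqP e _]; apply/eqP/val_inj.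
    by rewrite /= e.
  + by rewrite big1 // => k _; rewrite ifN ?mulr0 //; apply/negP => /andP[_ /eqP].
Qed.

Lemma ZX X a b p q : (Zm a b *m X) p q =
  (if (0 < p)%N then b * X (inord p.-1) q else 0) + (if (p : nat) == 0%N then a * X ord_max q else 0).
Proof.
rewrite mxE; under eq_bigr do rewrite mxE mulrDl.
rewrite big_split /=; have pl := ltn_ord p; congr (_ + _).
- case: ifP => hp.
  + rewrite (sum_single (k0 := inord p.-1)).
      by rewrite inordK ?prednK ?eqxx //; lia.
    move=> k kp; rewrite ifN ?mul0r //; apply: contra kp => /eqP e; apply/eqP/val_inj.
    rewrite /= inordK e //; lia.
  + rewrite big1 // => k _; rewrite ifN ?mul0r //; lia.
- case: (eqVneq (p : nat) 0%N) => hp.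
  + rewrite (sum_single (k0 := ord_max)) /= ?hp ?eqxx // => k k0.
    case: eqP => [e|]; last by rewrite mul0r.
    by case/negP: k0; apply/eqP/val_inj; rewrite /= e.
  + by rewrite big1 // => k _; rewrite /= ?(negbTE hp) /= mul0r.
Qed.

Lemma F_comm X a b : ST X -> (FcM a b X <-> X *m Zm a b = Zm a b *m X).
Proof.
move=> [x hx].
have hF' : FcM a b X <-> forall j, (0 < j)%N -> (j <= m)%N -> a * x j%:Z = b * x (j%:Z - m.+1%:Z).
  split => h j j0 jm; have := h j j0 jm; have [uj vj] := uv_ST hx j0 jm;
  by rewrite /u /v in uj vj; rewrite uj vj.
rewrite hF'; split.
- move=> h; apply/matrixP => p q; rewrite XZ ZX !hx.
  have pl := ltn_ord p; have ql := ltn_ord q.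
  case: (posnP p) => p0; case: (ltngtP q m) => qm /=; try lia.
  + rewrite inordK ?ltnS // addr0 add0r.
    have -> : m%:Z - q%:Z = (m - q)%N%:Z by lia.
    rewrite (h (m - q)%N); [|lia|lia]; rewrite mulrC; congr (_ * x _); lia.
  + rewrite add0r add0r mulrC; congr (_ * x _); lia.
  + rewrite inordK ?ltnS // !addr0 mulrC inordK; [|lia]; congr (_ * x _); lia.
  + rewrite add0r addr0 mulrC; transitivity (a * x p%:Z); first by congr (_ * x _); lia.
    rewrite (h p); [|lia|lia]; rewrite inordK; [|lia]; rewrite addr0; congr (_ * x _); lia.
- move=> hc j j0 jm.
  have := congr1 (fun M : 'M[C]_m.+1 => M ord0 (inord (m - j)%N)) hc.
  rewrite /= XZ ZX /= !hx inordK; [|lia].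
  rewrite ifT; [|lia]; rewrite ifF; [|apply/negbTE; lia].
  rewrite !addr0 !add0r => e.
  transitivity (a * x ((ord_max : 'I_m.+1)%:Z - (m - j)%N%:Z)); first by congr (_ * x _); rewrite /=; lia.
  rewrite -e mulrC; congr (_ * x _); rewrite inordK; lia.
Qed.

Lemma Fclosed X Y a b : ST X -> ST Y -> FcM a b X -> FcM a b Y -> (a != 0) || (b != 0) ->
  ST (X *m Y) /\ FcM a b (X *m Y).
Proof.
move=> sX sY fX fY ab.
have sXY : ST (X *m Y).
  apply: crit2 => // i j i0 im j0 jm.
  have e1 := fX i i0 im; have e2 := fY j j0 jm.
  rewrite /u /v; move: e1 e2.
  set ux := X _ _; set vx := X _ _; set uy := Y _ _; set vy := Y _ _ => e1 e2.
  apply/eqP; rewrite -subr_eq0; apply/eqP.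
  have k1 : a * (ux * vy - vx * uy) = 0.
    transitivity ((a * ux) * vy - vx * (a * uy)); first by ring.
    by rewrite e1 e2; ring.
  have k2 : b * (ux * vy - vx * uy) = 0.
    transitivity (ux * (b * vy) - (b * vx) * uy); first by ring.
    by rewrite -e1 -e2; ring.
  case/orP: ab => h.
  + by move/eqP: k1; rewrite mulf_eq0 (negbTE h) => /eqP.
  + by move/eqP: k2; rewrite mulf_eq0 (negbTE h) => /eqP.
split => //; apply/(F_comm _ _ sXY).
have cX := (F_comm _ _ sX).1 fX; have cY := (F_comm _ _ sY).1 fY.
by rewrite -mulmxA cY mulmxA cX mulmxA.
Qed.

End Scalar.

End Aux.
Import Aux.


Theorem corollary5p3 (C : numClosedFieldType) (n d : nat)
    (hn : (2 <= n)%N) (hd : (0 < d)%N)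
    (Al : 'M[C]_(n * d) -> Prop) :
  maximal_algebra_in (@toeplitz_in C n d (@diag_alg C d)) Al ->
  exists A B : 'M[C]_d, diag_alg A /\ diag_alg B /\
    (forall M, Al M <-> @F_set C n d (@diag_alg C d) A B M).
Proof.
case: n hn Al => [//|n] hn Al; case: d hd Al => [//|d] hd Al.
move=> [[hS [h0 [hlin hmul]]] hmax].
have pick : forall r : 'I_d.+1, exists ab : C * C, ((ab.1 != 0) || (ab.2 != 0)) /\
    forall X, Al X -> FcM ab.1 ab.2 (slice X r).
  move=> r.
  case: (classic (exists X, exists i, Al X /\ (0 < i)%N /\ (i <= n)%N /\
                   (u (slice X r) i != 0 \/ v (slice X r) i != 0))).
  - case=> X [i [hX [i0 [im hnz]]]].
    exists (v (slice X r) i, u (slice X r) i); split.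
      by case: hnz => h; rewrite /= h ?orbT.
    move=> Y hY j j0 jm /=.
    have [bX sX] := (TI_iff X).1 (hS X hX).
    have [bY sY] := (TI_iff Y).1 (hS Y hY).
    have [bXY sXY] := (TI_iff _).1 (hS _ (hmul X Y hX hY)).
    have hc : CR (slice X r) (slice Y r).
      by apply: crit1 => //; rewrite -slice_mul.
    exact: (esym (hc i j i0 im j0 jm)).
  - move=> hn0; exists (1, 0); split; first by rewrite /= oner_neq0.
    move=> Y hY j j0 jm /=.
    have : u (slice Y r) j = 0.
      apply/eqP; apply/negP => hne.
      apply: hn0; exists Y, j; split; first done; split; first done; split; first done.
      by left; apply/negP.
    by rewrite /u => ->; rewrite mul0r mulr0.
have [f hf] : exists f : 'I_d.+1 -> C * C, forall r, ((f r).1 != 0) || ((f r).2 != 0) /\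
    forall X, Al X -> FcM (f r).1 (f r).2 (slice X r).
  exists (fun r => proj1_sig (constructive_indefinite_description _ (pick r))).
  by move=> r; exact: (proj2_sig (constructive_indefinite_description _ (pick r))).
pose A : 'M[C]_d.+1 := \matrix_(r, s) if r == s then (f r).1 else 0.
pose B : 'M[C]_d.+1 := \matrix_(r, s) if r == s then (f r).2 else 0.
have dA : is_diag_mx A.
  by apply/is_diag_mxP => r s rs; rewrite mxE ifN //; apply: contra rs => /eqP ->.
have dB : is_diag_mx B.
  by apply/is_diag_mxP => r s rs; rewrite mxE ifN //; apply: contra rs => /eqP ->.
have Arr r : A r r = (f r).1 by rewrite mxE eqxx.
have Brr r : B r r = (f r).2 by rewrite mxE eqxx.
have inc : forall X, Al X -> F_set (@diag_alg C d.+1) A B X.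
  move=> X hX; apply/(F_iff _ dA dB); split; first exact: hS.
  by move=> r; rewrite Arr Brr; apply: (hf r).2.
have alg : algebra_in (@toeplitz_in C n.+1 d.+1 (@diag_alg C d.+1)) (F_set (@diag_alg C d.+1) A B).
  split; [|split; [|split]].
  - by move=> X /(F_iff _ dA dB) [].
  - exact: inc.
  - move=> c X Y [T [hT [hM hF]]] [U [hU [hN hG]]].
    exists (fun j => c *: T j + U j); split; [|split].
    + move=> j hj; apply/is_diag_mxP => r s rs; rewrite !mxE.
      move/is_diag_mxP: (hT j hj) => -> //; move/is_diag_mxP: (hU j hj) => -> //.
      by rewrite mulr0 addr0.
    + by move=> p q r s; rewrite !mxE hM hN.
    + by move=> j hj; rewrite !mulmxDr -!scalemxAr hF // hG.
  - move=> X Y /(F_iff _ dA dB) [tX fX] /(F_iff _ dA dB) [tY fY].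
    have [bX sX] := (TI_iff X).1 tX; have [bY sY] := (TI_iff Y).1 tY.
    have ab r : ((A r r != 0) || (B r r != 0)) by rewrite Arr Brr; case: (hf r).
    apply/(F_iff _ dA dB); split.
    + apply/TI_iff; split; first exact: BD_mul.
      by move=> r; rewrite slice_mul //; case: (Fclosed (sX r) (sY r) (fX r) (fY r) (ab r)).
    + by move=> r; rewrite slice_mul //; case: (Fclosed (sX r) (sY r) (fX r) (fY r) (ab r)).
exists A, B; split; first exact: dA; split; first exact: dB.
move=> M; split; first exact: inc.
exact: (hmax _ alg inc M).
Qed.
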